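(* Suppose $\Delta;\,n\vdash e:\theta,\ \Pi$ is derivable in the static analysis. Then for all $P\subseteq\mathsf{Privileges}$ and all $h\in[\![\Delta^*]\!]$, if $\mathsf{safe}\,\Delta(h)$ and $\Pi\subseteq P$, then $\mathsf{safe}\,\theta\,([\![\Delta^*\vdash e:\theta^*]\!]\,n\,P\,h)$.
   Context: Fix sets $\mathsf{Principals}$ and $\mathsf{Privileges}$ and an access control list $\mathcal{A}:\mathsf{Principals}\to\mathcal{P}(\mathsf{Privileges})$. Language. Types: $t::=\mathtt{bool}\mid t_1\to t_2$. Expressions: $e::=\mathtt{true}\mid x\mid \mathtt{if}\ e\ \mathtt{then}\ e_1\ \mathtt{else}\ e_2\mid \lambda x.e\mid e_1\,e_2\mid \mathtt{letrec}\ f(x)=e_1\ \mathtt{in}\ e_2\mid \mathtt{signs}\ n\ e\mid \mathtt{dopriv}\ p\ \mathtt{in}\ e\mid \mathtt{check}\ p\ \mathtt{for}\ e\mid \mathtt{test}\ p\ \mathtt{then}\ e_1\ \mathtt{else}\ e_2$ ($n$ a principal, $p$ a privilege). Typing $D\vdash e:t$ is simply typed: $\mathtt{letrec}$ typed by $D,f:t_1\to t_2,x:t_1\vdash e_1:t_2$ and $D,f:t_1\to t_2\vdash e_2:t$; $\mathtt{signs},\mathtt{dopriv},\mathtt{check}$ preserve the body type; $\mathtt{test}$ and $\mathtt{if}$ need branches of a common type ($\mathtt{if}$ a $\mathtt{bool}$ guard). Eager semantics. $\bot,\star$ are two distinct values, neither booleans nor functions. For a cpo $C$, $C_{\bot\star}=C\cup\{\bot,\star\}$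 with $u\le v$ iff $u=\bot$ or $u=v$ or $u,v\in C$, $u\le v$. $[\![\mathtt{bool}]\!]=\{\mathsf{true},\mathsf{false}\}$ and $\mathcal{P}(\mathsf{Privileges})$ ordered by equality; $[\![t_1\to t_2]\!]=\mathcal{P}(\mathsf{Privileges})\to[\![t_1]\!]\to[\![t_2]\!]_{\bot\star}$ (continuous, pointwise order). $[\![D]\!]$: records $h$ with $h.x\in[\![D(x)]\!]$. $[\![D\vdash e:t]\!]\in\mathsf{Principals}\to\mathcal{P}(\mathsf{Privileges})\to[\![D]\!]\to[\![t]\!]_{\bot\star}$, written $[\![e]\!]nPh$. ''let $d=E_1$ in $E_2$'' yields $E_1$ if $E_1\in\{\bot,\star\}$, else $E_2$ with $d:=E_1$. $P\sqcup_n\{p\}$ is $P\cup\{p\}$ if $p\in\mathcal{A}(n)$, else $P$. Equations: $[\![\mathtt{true}]\!]nPh=\mathsf{true}$; $[\![x]\!]nPh=h.x$; $[\![\mathtt{if}\ e\ \mathtt{then}\ e_1\ \mathtt{else}\ e_2]\!]nPh=$ let $b=[\![e]\!]nPh$ in (if $b$ then $[\![e_1]\!]nPh$ else $[\![e_2]\!]nPh$); $[\![\lambda x.e]\!]nPh=\lambda P'.\lambda d.[\![e]\!]nP'(h[x\mapsto d])$; $[\![e_1e_2]\!]nPh=$ let $f=[\![e_1]\!]nPh$ in let $d=[\![e_2]\!]nPh$ in $fPd$; $[\![\mathtt{letrec}\ f(x)=e_1\ \mathtt{in}\ e_2]\!]nPh=[\![e_2]\!]nP(h[f\mapsto\mathit{fix}\,G])$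 with $G(g)=\lambda P'.\lambda d.[\![e_1]\!]nP'(h[f\mapsto g,x\mapsto d])$ ($\mathit{fix}$ = least fixed point); $[\![\mathtt{signs}\ n'\ e]\!]nPh=[\![e]\!]n'(P\cap\mathcal{A}(n'))h$; $[\![\mathtt{dopriv}\ p\ \mathtt{in}\ e]\!]nPh=[\![e]\!]n(P\sqcup_n\{p\})h$; $[\![\mathtt{check}\ p\ \mathtt{for}\ e]\!]nPh=$ if $p\in P$ then $[\![e]\!]nPh$ else $\star$; $[\![\mathtt{test}\ p\ \mathtt{then}\ e_1\ \mathtt{else}\ e_2]\!]nPh=$ if $p\in P$ then $[\![e_1]\!]nPh$ else $[\![e_2]\!]nPh$. Static analysis. Annotated types $\theta::=\mathtt{bool}\mid\theta_1\xrightarrow{\Pi}\theta_2$ ($\Pi\subseteq\mathsf{Privileges}$); erasure $\mathtt{bool}^*=\mathtt{bool}$, $(\theta_1\xrightarrow{\Pi}\theta_2)^*=\theta_1^*\to\theta_2^*$, and $\Delta^*$ erases an annotated context pointwise. Subtyping: least relation with $\mathtt{bool}\le\mathtt{bool}$ and $\theta_1\xrightarrow{\Pi_1}\theta_1'\le\theta_2\xrightarrow{\Pi_2}\theta_2'$ if $\theta_2\le\theta_1$, $\theta_1'\le\theta_2'$, $\Pi_1\subseteq\Pi_2$. Rules for $\Delta;n\vdash e:\theta,\Pi$: $\mathtt{true}:\mathtt{bool},\varnothing$; $x:\Delta(x),\varnothing$; $\lambda x.e:\theta_1\xrightarrow{\Pi}\theta_2,\varnothing$ if $\Delta,x:\theta_1;n\vdash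 e:\theta_2,\Pi$; $e_1e_2:\theta_2,\Pi\cup\Pi_1\cup\Pi_2$ if $e_1:\theta_1\xrightarrow{\Pi}\theta_2,\Pi_1$, $e_2:\theta_1',\Pi_2$, $\theta_1'\le\theta_1$; $\mathtt{if}\ e\ \mathtt{then}\ e_1\ \mathtt{else}\ e_2:\theta,\Pi_1\cup\Pi_2\cup\Pi_3$ if $e:\mathtt{bool},\Pi_1$, $e_1:\theta,\Pi_2$, $e_2:\theta,\Pi_3$; $\mathtt{letrec}\ f(x)=e_1\ \mathtt{in}\ e_2:\theta,\Pi\cup\Pi_1$ if $\Delta,f:\theta_1\xrightarrow{\Pi}\theta_2,x:\theta_1;n\vdash e_1:\theta_2,\Pi$ and $\Delta,f:\theta_1\xrightarrow{\Pi}\theta_2;n\vdash e_2:\theta,\Pi_1$; $\mathtt{check}\ p\ \mathtt{for}\ e:\theta,\Pi\cup\{p\}$ if $e:\theta,\Pi$; $\mathtt{dopriv}\ p\ \mathtt{in}\ e:\theta,\Pi$ if $e:\theta,\Pi\sqcup_n\{p\}$; $\Delta;n\vdash\mathtt{signs}\ n'\ e:\theta,\Pi$ if $\Delta;n'\vdash e:\theta,\Pi$ and $\Pi\subseteq\mathcal{A}(n')$; $\mathtt{test}\ p\ \mathtt{then}\ e_1\ \mathtt{else}\ e_2:\theta,\Pi_1\cup\Pi_2$ if $e_1:\theta,\Pi_1$ and $e_2:\theta,\Pi_2$ (all premises under $\Delta;n$ unless stated). Safety predicate. $\mathsf{safe}\,\theta$ on $[\![\theta^*]\!]_{\bot\star}$: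 $\mathsf{safe}\,\theta(\bot)$ true, $\mathsf{safe}\,\theta(\star)$ false; $\mathsf{safe}\,\mathtt{bool}(b)$ true; $\mathsf{safe}(\theta_1\xrightarrow{\Pi}\theta_2)(f)$ iff for all $P\subseteq\mathsf{Privileges}$, $d\in[\![\theta_1^*]\!]$: $\Pi\subseteq P$ and $\mathsf{safe}\,\theta_1(d)$ imply $\mathsf{safe}\,\theta_2(fPd)$. For environments, $\mathsf{safe}\,\Delta(h)$ iff $\mathsf{safe}(\Delta(x))(h.x)$ for all $x$ in the domain of $h$. *)

(* Defs.v *)
From Stdlib Require Import Arith List ClassicalEpsilon.
Set Implicit Arguments.
Unset Strict Implicit.

Section Language.
Variables (Principal Priv : Type).

Definition pset := Priv -> Prop.
Definition pempty : pset := fun _ => False.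
Definition psingle (p : Priv) : pset := fun q => q = p.
Definition punion (P Q : pset) : pset := fun q => P q \/ Q q.
Definition pinter (P Q : pset) : pset := fun q => P q /\ Q q.
Definition psubset (P Q : pset) : Prop := forall q, P q -> Q q.

Definition var := nat.

Inductive ty : Type := Tbool | Tarrow (t1 t2 : ty).

Inductive expr : Type :=
| Etrue
| Evar (x : var)
| Eif (e e1 e2 : expr)
| Elam (x : var) (e : expr)
| Eapp (e1 e2 : expr)
| Eletrec (f x : var) (e1 e2 : expr)
| Esigns (n : Principal) (e : expr)
| Edopriv (p : Priv) (e : expr)
| Echeck (p : Priv) (e : expr)
| Etest (p : Priv) (e1 e2 : expr).

(* contexts: association lists, the most recent binding first (D, x:t) *)
Definition ctx := list (var * ty).
Fixpoint lookup (D : ctx) (x : var) : option ty :=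
  match D with
  | nil => None
  | (y, t) :: D' => if Nat.eqb x y then Some t else lookup D' x
  end.

(* simple typing D |- e : t (in Type, as the semantics is defined on it) *)
Inductive typing : ctx -> expr -> ty -> Type :=
| T_true D : typing D Etrue Tbool
| T_var D x t : lookup D x = Some t -> typing D (Evar x) t
| T_if D e e1 e2 t :
    typing D e Tbool -> typing D e1 t -> typing D e2 t -> typing D (Eif e e1 e2) t
| T_lam D x e t1 t2 :
    typing ((x, t1) :: D) e t2 -> typing D (Elam x e) (Tarrow t1 t2)
| T_app D e1 e2 t1 t2 :
    typing D e1 (Tarrow t1 t2) -> typing D e2 t1 -> typing D (Eapp e1 e2) t2
| T_letrec D f x e1 e2 t1 t2 t :
    typing ((x, t1) :: (f, Tarrow t1 t2) :: D) e1 t2 ->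
    typing ((f, Tarrow t1 t2) :: D) e2 t ->
    typing D (Eletrec f x e1 e2) t
| T_signs D n e t : typing D e t -> typing D (Esigns n e) t
| T_dopriv D p e t : typing D e t -> typing D (Edopriv p e) t
| T_check D p e t : typing D e t -> typing D (Echeck p e) t
| T_test D p e1 e2 t :
    typing D e1 t -> typing D e2 t -> typing D (Etest p e1 e2) t.

Record preord := { car : Type; rel : car -> car -> Prop }.

Inductive lifted (T : Type) : Type := Bot | Star | Val (v : T).
Arguments Bot {T}. Arguments Star {T}.

Definition lift_le (C : preord) (u v : lifted (car C)) : Prop :=
  u = Bot \/ u = v \/ (exists a b, u = Val a /\ v = Val b /\ rel a b).
Definition lift (C : preord) : preord := {| car := lifted (car C); rel := fun u v => @lift_le C u v |}.

Definition chain (C : preord) (c : nat -> car C) : Prop :=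
  forall i, @rel C (c i) (c (S i)).
Definition is_lub (C : preord) (c : nat -> car C) (x : car C) : Prop :=
  (forall i, @rel C (c i) x) /\ (forall y, (forall i, @rel C (c i) y) -> @rel C x y).
Definition continuous (C E : preord) (f : car C -> car E) : Prop :=
  (forall x y, @rel C x y -> @rel E (f x) (f y)) /\
  (forall (c : nat -> car C) x, @chain C c -> @is_lub C c x -> @is_lub E (fun i => f (c i)) (f x)).

(* [t1 -> t2] = P(Privileges) -> [t1] -> [t2]_{bot,star}, continuous,
   pointwise order (P(Privileges) is discrete, so only continuity in the
   second argument is a constraint). *)
Definition funspace (C E : preord) : preord :=
  {| car := { f : pset -> car C -> lifted (car E) |
              forall P, continuous (C := C) (E := lift E) (f P) };
     rel := fun f g => forall P d, lift_le (proj1_sig f P d) (proj1_sig g P d) |}.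

Fixpoint dom (t : ty) : preord :=
  match t with
  | Tbool => {| car := bool; rel := @eq bool |}
  | Tarrow t1 t2 => funspace (dom t1) (dom t2)
  end.

Lemma const_bot_continuous (C E : preord) :
  continuous (C := C) (E := lift E) (fun _ => Bot).
Proof.
  split.
  - intros; left; reflexivity.
  - intros c x _ _; split.
    + intros i; left; reflexivity.
    + intros y _; left; reflexivity.
Qed.

Definition botfun (C E : preord) : car (funspace C E) :=
  exist (fun f : pset -> car C -> lifted (car E) => forall P, continuous (C := C) (E := lift E) (f P)) (fun _ _ => Bot) (fun _ => const_bot_continuous C E).

(* The defining equations of the semantics always produce continuous
   functions, so the guard always succeeds; it only lets us write the
   equations before proving continuity. *)
Definition mk_fun (C E : preord) (f : pset -> car C -> lifted (car E))
  : car (funspace C E) :=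
  match excluded_middle_informative
          (forall P, continuous (C := C) (E := lift E) (f P)) with
  | left H => exist _ f H
  | right _ => botfun C E
  end.

Definition lfp (C : preord) (i : inhabited (car C)) (G : car C -> car C) : car C :=
  epsilon i (fun g => G g = g /\ forall g', G g' = g' -> @rel C g g').

Definition lift_opt (o : option ty) : Type :=
  match o with Some t => car (dom t) | None => unit end.
Definition env (D : ctx) := forall x : var, lift_opt (lookup D x).
Definition upd (D : ctx) (h : env D) (x : var) (t : ty) (d : car (dom t))
  : env ((x, t) :: D) :=
  fun y => match Nat.eqb y x as b
             return lift_opt (if b then Some t else lookup D y) with
           | true => d
           | false => h y
           end.

Section Semantics.
Variable A : Principal -> pset.   (* access control list *)

Definition pjoin (n : Principal) (P : pset) (p : Priv) : pset :=
  fun q => P q \/ (q = p /\ A n p).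

Fixpoint den (D : ctx) (e : expr) (t : ty) (d : typing D e t) {struct d}
  : Principal -> pset -> env D -> lifted (car (dom t)) :=
  match d in typing D e t return Principal -> pset -> env D -> lifted (car (dom t)) with
  | T_true _ => fun _ _ _ => Val true
  | @T_var D x t H => fun _ _ h => Val (eq_rect _ lift_opt (h x) _ H)
  | T_if d0 d1 d2 => fun n P h =>
      match den d0 n P h with
      | Bot => Bot | Star => Star
      | Val b => if b then den d1 n P h else den d2 n P h
      end
  | @T_lam D x e t1 t2 d1 => fun n P h =>
      Val (mk_fun (C := dom t1) (E := dom t2)
             (fun P' v => den d1 n P' (@upd _ h x t1 v)))
  | T_app d1 d2 => fun n P h =>
      match den d1 n P h with
      | Bot => Bot | Star => Star
      | Val f =>
          match den d2 n P h with
          | Bot => Bot | Star => Star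
          | Val v => proj1_sig f P v
          end
      end
  | @T_letrec D f x e1 e2 t1 t2 t d1 d2 => fun n P h =>
      let G := fun g : car (dom (Tarrow t1 t2)) =>
        mk_fun (C := dom t1) (E := dom t2)
          (fun P' v => den d1 n P' (@upd _ (@upd _ h f (Tarrow t1 t2) g) x t1 v)) in
      den d2 n P
        (@upd _ h f (Tarrow t1 t2)
           (lfp (C := dom (Tarrow t1 t2)) (inhabits (botfun (dom t1) (dom t2))) G))
  | @T_signs D n' e t d1 => fun _ P h => den d1 n' (pinter P (A n')) h
  | @T_dopriv D p e t d1 => fun n P h => den d1 n (pjoin n P p) h
  | @T_check D p e t d1 => fun n P h =>
      if excluded_middle_informative (P p) then den d1 n P h else Star
  | @T_test D p e1 e2 t d1 d2 => fun n P h =>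
      if excluded_middle_informative (P p) then den d1 n P h else den d2 n P h
  end.

Inductive aty : Type := Abool | Aarrow (th1 : aty) (Pi : pset) (th2 : aty).

Fixpoint aerase (th : aty) : ty :=
  match th with
  | Abool => Tbool
  | Aarrow th1 _ th2 => Tarrow (aerase th1) (aerase th2)
  end.

Inductive subty : aty -> aty -> Prop :=
| S_bool : subty Abool Abool
| S_arrow th1 th1' th2 th2' Pi1 Pi2 :
    subty th2 th1 -> subty th1' th2' -> psubset Pi1 Pi2 ->
    subty (Aarrow th1 Pi1 th1') (Aarrow th2 Pi2 th2').

Definition actx := list (var * aty).
Fixpoint alookup (G : actx) (x : var) : option aty :=
  match G with
  | nil => None
  | (y, th) :: G' => if Nat.eqb x y then Some th else alookup G' x
  end.
Definition cerase (G : actx) : ctx := map (fun yt => (fst yt, aerase (snd yt))) G.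

Inductive atyping : actx -> Principal -> expr -> aty -> pset -> Type :=
| A_true G n : atyping G n Etrue Abool pempty
| A_var G n x th : alookup G x = Some th -> atyping G n (Evar x) th pempty
| A_lam G n x e th1 th2 Pi :
    atyping ((x, th1) :: G) n e th2 Pi ->
    atyping G n (Elam x e) (Aarrow th1 Pi th2) pempty
| A_app G n e1 e2 th1 th1' th2 Pi Pi1 Pi2 :
    atyping G n e1 (Aarrow th1 Pi th2) Pi1 ->
    atyping G n e2 th1' Pi2 -> subty th1' th1 ->
    atyping G n (Eapp e1 e2) th2 (punion (punion Pi Pi1) Pi2)
| A_if G n e e1 e2 th Pi1 Pi2 Pi3 :
    atyping G n e Abool Pi1 -> atyping G n e1 th Pi2 -> atyping G n e2 th Pi3 ->
    atyping G n (Eif e e1 e2) th (punion (punion Pi1 Pi2) Pi3)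
| A_letrec G n f x e1 e2 th1 th2 th Pi Pi1 :
    atyping ((x, th1) :: (f, Aarrow th1 Pi th2) :: G) n e1 th2 Pi ->
    atyping ((f, Aarrow th1 Pi th2) :: G) n e2 th Pi1 ->
    atyping G n (Eletrec f x e1 e2) th (punion Pi Pi1)
| A_check G n p e th Pi :
    atyping G n e th Pi -> atyping G n (Echeck p e) th (punion Pi (psingle p))
| A_dopriv G n p e th Pi :
    atyping G n e th (pjoin n Pi p) -> atyping G n (Edopriv p e) th Pi
| A_signs G n n' e th Pi :
    atyping G n' e th Pi -> psubset Pi (A n') -> atyping G n (Esigns n' e) th Pi
| A_test G n p e1 e2 th Pi1 Pi2 :
    atyping G n e1 th Pi1 -> atyping G n e2 th Pi2 ->
    atyping G n (Etest p e1 e2) th (punion Pi1 Pi2).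

Lemma subty_erase th th' : subty th th' -> aerase th = aerase th'.
Proof. induction 1; simpl; congruence. Qed.

Lemma lookup_cerase G x th :
  alookup G x = Some th -> lookup (cerase G) x = Some (aerase th).
Proof.
  induction G as [|[y th0] G IH]; simpl; [discriminate|].
  destruct (Nat.eqb x y); [congruence|exact IH].
Qed.

Fixpoint erase_deriv G n e th Pi (d : atyping G n e th Pi) {struct d}
  : typing (cerase G) e (aerase th) :=
  match d in atyping G n e th Pi return typing (cerase G) e (aerase th) with
  | A_true _ _ => T_true _
  | A_var _ H => T_var (lookup_cerase H)
  | A_lam d1 => T_lam (erase_deriv d1)
  | A_app d1 d2 s =>
      T_app (erase_deriv d1) (eq_rect _ _ (erase_deriv d2) _ (subty_erase s))
  | A_if d0 d1 d2 => T_if (erase_deriv d0) (erase_deriv d1) (erase_deriv d2)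
  | A_letrec d1 d2 => T_letrec (erase_deriv d1) (erase_deriv d2)
  | @A_check _ _ p _ _ _ d1 => T_check p (erase_deriv d1)
  | @A_dopriv _ _ p _ _ _ d1 => T_dopriv p (erase_deriv d1)
  | @A_signs _ _ n' _ _ _ d1 _ => T_signs n' (erase_deriv d1)
  | @A_test _ _ p _ _ _ _ _ d1 d2 => T_test p (erase_deriv d1) (erase_deriv d2)
  end.

End Semantics.

Fixpoint safe (th : aty) : lifted (car (dom (aerase th))) -> Prop :=
  match th return lifted (car (dom (aerase th))) -> Prop with
  | Abool => fun u => match u with Star => False | _ => True end
  | Aarrow th1 Pi th2 => fun u =>
      match u with
      | Bot => True
      | Star => False
      | Val f => forall (P : pset) (d : car (dom (aerase th1))),
          psubset Pi P -> @safe th1 (Val d) -> @safe th2 (proj1_sig f P d)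
      end
  end.

Definition safe_env (G : actx) (h : env (cerase G)) : Prop :=
  forall x th (H : alookup G x = Some th),
    @safe th (Val (eq_rect _ lift_opt (h x) _ (lookup_cerase H))).

End Language.

(* Main.v *)
Require Import Defs.
From Stdlib Require Import Arith List Lia ClassicalEpsilon Classical FunctionalExtensionality ProofIrrelevance.
Set Implicit Arguments. Unset Strict Implicit.
Arguments Bot {T}. Arguments Star {T}. Arguments Abool {Priv}. Arguments Aarrow {Priv}.

Record po (C : preord) : Prop := {
  po_refl : forall x, @rel C x x;
  po_trans : forall x y z, @rel C x y -> @rel C y z -> @rel C x z;
  po_anti : forall x y, @rel C x y -> @rel C y x -> x = y }.
Definition complete (C : preord) := forall c, @chain C c -> exists x, @is_lub C c x.


Section Gen.
Lemma chain_mono' (C : preord) (Hr : forall x : car C, rel x x)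
  (Ht : forall x y z : car C, rel x y -> rel y z -> rel x z) (c : nat -> car C) :
  chain c -> forall i j, i <= j -> rel (c i) (c j).
Proof.
  intros Hc i j Hij. induction Hij.
  - apply Hr.
  - eapply Ht; eauto.
Qed.
Lemma chain_mono (C : preord) (HC : po C) (c : nat -> car C) :
  chain c -> forall i j, i <= j -> rel (c i) (c j).
Proof. apply chain_mono'; [apply (po_refl HC)|apply (po_trans HC)]. Qed.

Lemma lub_unique (C : preord) (HC : po C) c x y :
  @is_lub C c x -> is_lub c y -> x = y.
Proof.
  intros [H1 H2] [H3 H4]. apply (po_anti HC); [apply H2 | apply H4]; auto.
Qed.

Lemma const_lub (C : preord) (HC : po C) (x : car C) : is_lub (fun _ : nat => x) x.
Proof. split; [intros; apply (po_refl HC) | intros y H; apply (H 0)]. Qed.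

Lemma lub_ext (C : preord) (c c' : nat -> car C) x :
  (forall i, c i = c' i) -> is_lub c x -> is_lub c' x.
Proof.
  intros E [H1 H2]; split.
  - intros i; rewrite <- E; auto.
  - intros y H; apply H2; intros i; rewrite E; auto.
Qed.

Lemma tail_lub (C : preord) (HC : po C) (c : nat -> car C) k x :
  (forall i, i < k -> rel (c i) (c k)) -> is_lub (fun i => c (i + k)) x -> is_lub c x.
Proof.
  intros Hk [H1 H2]; split.
  - intros i. destruct (lt_dec i k) as [l|l].
    + eapply (po_trans HC). apply Hk, l. apply (H1 0).
    + replace i with ((i - k) + k) by lia. apply H1.
  - intros y H. apply H2. intros; apply H.
Qed.

Lemma tail_lub_inv (C : preord) (HC : po C) (c : nat -> car C) k x :
  chain c -> is_lub c x -> is_lub (fun i => c (i + k)) x.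
Proof.
  intros Hc [H1 H2]; split.
  - intros; apply H1.
  - intros y H. apply H2. intros i. eapply (po_trans HC).
    apply (chain_mono HC Hc) with (j := i + k); lia. apply H.
Qed.

Lemma exchange (C : preord) (HC : po C) (a : nat -> nat -> car C) r q x :
  (forall i, is_lub (fun j => a i j) (r i)) ->
  (forall j, is_lub (fun i => a i j) (q j)) ->
  is_lub r x -> is_lub q x.
Proof.
  intros Hr Hq [H1 H2]; split.
  - intros j. apply (proj2 (Hq j)). intros i.
    eapply (po_trans HC). apply (proj1 (Hr i)). apply H1.
  - intros y H. apply H2. intros i. apply (proj2 (Hr i)). intros j.
    eapply (po_trans HC). apply (proj1 (Hq j)). apply H.
Qed.

Lemma diag_lub (C : preord) (HC : po C) (a : nat -> nat -> car C) r x :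
  (forall i j, rel (a i j) (a (S i) j)) -> (forall i j, rel (a i j) (a i (S j))) ->
  (forall i, is_lub (fun j => a i j) (r i)) -> is_lub r x ->
  is_lub (fun i => a i i) x.
Proof.
  intros Hi Hj Hr [H1 H2].
  assert (M : forall i j i' j', i <= i' -> j <= j' -> rel (a i j) (a i' j')).
  { intros. eapply (po_trans HC).
    apply (chain_mono HC (c := fun i => a i j)); [intros k; apply Hi| eauto].
    apply (chain_mono HC (c := fun j => a i' j)); [intros k; apply Hj| eauto]. }
  split.
  - intros i. eapply (po_trans HC). apply (proj1 (Hr i)). apply H1.
  - intros y H. apply H2. intros i. apply (proj2 (Hr i)). intros j.
    eapply (po_trans HC). apply (M i j (max i j) (max i j)); lia. apply H.
Qed.
End Gen.

Lemma le_bot_inv (C : preord) (w : lifted (car C)) : lift_le w Bot -> w = Bot.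
Proof. intros [H|[H|(a&b&H1&H2&H3)]]; auto; discriminate. Qed.
Lemma le_star_inv (C : preord) (w : lifted (car C)) : lift_le Star w -> w = Star.
Proof. intros [H|[H|(a&b&H1&H2&H3)]]; auto; discriminate. Qed.
Lemma le_val_inv (C : preord) (HC : po C) (a : car C) w :
  lift_le (Val a) w -> exists b, w = Val b /\ rel a b.
Proof.
  intros [H|[H|(a'&b&H1&H2&H3)]]; try discriminate.
  - subst; exists a; split; auto; apply (po_refl HC).
  - injection H1; intros; subst; eauto.
Qed.
Lemma le_vv (C : preord) (HC : po C) (a b : car C) : lift_le (Val a) (Val b) -> rel a b.
Proof. intros H; destruct (le_val_inv HC H) as (b'&E&R); injection E; intros; subst; auto. Qed.
Lemma vv_le (C : preord) (a b : car C) : rel a b -> lift_le (Val a) (Val b).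
Proof. intros; right; right; eauto. Qed.
Lemma bot_le (C : preord) (w : lifted (car C)) : lift_le Bot w.
Proof. left; auto. Qed.

Lemma po_lift_pre (C : preord) (HC : po C) :
  (forall x : lifted (car C), lift_le x x) /\
  (forall x y z : lifted (car C), lift_le x y -> lift_le y z -> lift_le x z) /\
  (forall x y : lifted (car C), lift_le x y -> lift_le y x -> x = y).
Proof.
  split; [|split].
  - intros; right; left; auto.
  - intros x y z H1 H2. destruct x as [| |a].
    + left; auto.
    + apply le_star_inv in H1; subst; auto.
    + destruct (le_val_inv HC H1) as (b&->&R1). destruct (le_val_inv HC H2) as (c&->&R2).
      apply vv_le. eapply (po_trans HC); eauto.
  - intros x y H1 H2. destruct x as [| |a].
    + symmetry; apply le_bot_inv; auto.
    + symmetry; apply le_star_inv; auto.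
    + destruct (le_val_inv HC H1) as (b&->&R1). f_equal. apply (po_anti HC); auto.
      apply le_vv; auto.
Qed.

Lemma extract (C : preord) (HC : po C) (u : nat -> lifted (car C)) k a0 :
  @chain (lift C) u -> u k = Val a0 ->
  exists c : nat -> car C, (forall i, u (i + k) = Val (c i)) /\ chain c.
Proof.
  intros Hu Hk.
  assert (Ex : forall i, exists b, u (i + k) = Val b).
  { induction i as [|i IH]. - exists a0; auto.
    - destruct IH as (b&Hb). pose proof (Hu (i + k)) as H. simpl in H.
      rewrite Hb in H. destruct (le_val_inv HC H) as (b'&E&_). exists b'. exact E. }
  exists (fun i => match u (i + k) with Val b => b | _ => a0 end).
  assert (E : forall i, u (i + k) = Val (match u (i + k) with Val b => b | _ => a0 end)).
  { intros i. destruct (Ex i) as (b&Hb). rewrite Hb. auto. }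
  split; auto.
  intros i. pose proof (Hu (i + k)) as H. simpl in H.
  rewrite (E i) in H. change (S (i + k)) with (S i + k) in H. rewrite (E (S i)) in H.
  apply le_vv in H; auto.
Qed.

Lemma val_lub (C : preord) (HC : po C) (c : nat -> car C) a :
  is_lub c a -> @is_lub (lift C) (fun i => Val (c i)) (Val a).
Proof.
  intros [H1 H2]; split.
  - intros i; apply vv_le; auto.
  - intros y H. destruct (le_val_inv HC (H 0)) as (b&->&_). apply vv_le. apply H2.
    intros i. apply le_vv; auto. apply H.
Qed.

Lemma lift_lub_cases (C : preord) (HC : po C) (u : nat -> lifted (car C)) w :
  @chain (lift C) u -> @is_lub (lift C) u w ->
  ((forall i, u i = Bot) /\ w = Bot) \/
  (exists k, u k = Star /\ w = Star) \/
  (exists k a (c : nat -> car C), (forall i, u (i + k) = Val (c i)) /\ chain c /\ is_lub c a /\ w = Val a).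
Proof.
  intros Hu [H1 H2].
  destruct (classic (forall i, u i = Bot)) as [Hb|Hb].
  - left; split; auto. apply le_bot_inv. apply H2. intros i; rewrite Hb; left; auto.
  - apply not_all_ex_not in Hb. destruct Hb as (k&Hk).
    destruct (u k) as [| |a0] eqn:E; [congruence| |].
    + right; left. exists k; split; auto. apply le_star_inv. rewrite <- E. apply H1.
    + right; right. destruct (extract HC Hu E) as (c&Hc&Hch).
      pose proof (H1 k) as Hw. rewrite E in Hw. destruct (le_val_inv HC Hw) as (a&->&_).
      exists k, a, c. repeat split; auto.
      * intros i. apply le_vv; auto. rewrite <- Hc. apply H1.
      * intros b Hb. apply le_vv; auto. apply H2.
        destruct (po_lift_pre HC) as (_&Tr&_).
        intros i. destruct (lt_dec i k) as [l|l].
        -- eapply Tr. apply (chain_mono' (C := lift C)) with (j := k); auto.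
           apply (po_lift_pre HC). lia.
           rewrite E. apply vv_le. rewrite <- (Nat.add_0_l k) in E. rewrite Hc in E. injection E; intros; subst. apply Hb.
        -- replace i with ((i - k) + k) by lia. rewrite Hc. apply vv_le, Hb.
Qed.

Lemma po_lift (C : preord) (HC : po C) : po (lift C).
Proof. destruct (po_lift_pre HC) as (R&T&An). constructor; auto. Qed.

Lemma complete_lift (C : preord) (HC : po C) (Hc : complete C) : complete (lift C).
Proof.
  pose proof (po_lift HC) as HL.
  intros u Hu.
  assert (M : forall i j, i <= j -> lift_le (u i) (u j)) by (apply (chain_mono HL); auto).
  destruct (classic (forall i, u i = Bot)) as [Hb|Hb].
  - exists Bot. split; [intros i; rewrite Hb; left; auto | intros; left; auto].
  - apply not_all_ex_not in Hb. destruct Hb as (k&Hk).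
    destruct (u k) as [| |a0] eqn:E; [congruence| |].
    + exists Star. apply (tail_lub HL) with (k := k).
      { intros; apply M; lia. }
      assert (forall i, u (i + k) = Star).
      { intros i; apply le_star_inv. rewrite <- E. apply M; lia. }
      eapply lub_ext; [intros i; symmetry; apply H|]. apply (const_lub HL).
    + destruct (extract HC Hu E) as (c&Hc'&Hch).
      destruct (Hc c Hch) as (a&Ha).
      exists (Val a). apply (tail_lub HL) with (k := k).
      { intros; apply M; lia. }
      eapply lub_ext; [intros i; symmetry; apply Hc'|]. apply val_lub; auto.
Qed.

Definition bind {X Y : Type} (u : lifted X) (g : X -> lifted Y) : lifted Y :=
  match u with Bot => Bot | Star => Star | Val v => g v end.

Lemma bind_mono (C E : preord) (HC : po C) (HE : po E) (u u' : lifted (car C))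
  (g g' : car C -> lifted (car E)) :
  lift_le u u' -> (forall a, lift_le (g a) (g' a)) ->
  (forall a b, rel a b -> lift_le (g' a) (g' b)) ->
  lift_le (bind u g) (bind u' g').
Proof.
  pose proof (po_lift HE) as HL.
  intros Hu Hg Hm. destruct u as [| |a]; simpl.
  - left; auto.
  - apply le_star_inv in Hu; subst; simpl. apply (po_refl HL).
  - destruct (le_val_inv HC Hu) as (b&->&R). simpl.
    eapply (po_trans HL); [apply Hg| apply Hm; auto].
Qed.

Lemma bind_lub (C E : preord) (HC : po C) (HE : po E) (u : nat -> lifted (car C)) w
  (gs : nat -> car C -> lifted (car E)) (g : car C -> lifted (car E)) :
  @chain (lift C) u -> @is_lub (lift C) u w ->
  (forall i a b, rel a b -> lift_le (gs i a) (gs i b)) ->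
  (forall i a, lift_le (gs i a) (gs (S i) a)) ->
  (forall a, @is_lub (lift E) (fun i => gs i a) (g a)) ->
  (forall c a, chain c -> is_lub c a -> @is_lub (lift E) (fun i => g (c i)) (g a)) ->
  @is_lub (lift E) (fun i => bind (u i) (gs i)) (bind w g).
Proof.
  pose proof (po_lift HE) as HL. pose proof (po_lift HC) as HLC.
  intros Hu Hw Hgm Hgc Hgl Hgcont.
  assert (Hs : @chain (lift E) (fun i => bind (u i) (gs i))).
  { intros i. apply bind_mono; auto. apply Hu. }
  assert (M : forall i j, i <= j -> lift_le (bind (u i) (gs i)) (bind (u j) (gs j)))
    by (apply (chain_mono HL Hs)).
  destruct (lift_lub_cases HC Hu Hw) as [(Hb&->)|[(k&Hk&->)|(k&a&c&Hc&Hch&Hl&->)]].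
  - simpl. eapply lub_ext; [intros i; rewrite Hb; simpl; reflexivity|]. apply (const_lub HL).
  - simpl. apply (tail_lub HL) with (k := k).
    { intros; apply M; lia. }
    assert (forall i, bind (u (i + k)) (gs (i + k)) = Star).
    { intros i; apply le_star_inv. replace Star with (bind (u k) (gs k)) by (rewrite Hk; auto).
      apply M; lia. }
    eapply lub_ext; [intros i; symmetry; apply H|]. apply (const_lub HL).
  - simpl. apply (tail_lub HL) with (k := k).
    { intros; apply M; lia. }
    eapply lub_ext; [intros i; rewrite Hc; simpl; reflexivity|]. simpl.
    apply (diag_lub HL (a := fun i j => gs (j + k) (c i)) (r := fun i => g (c i))).
    + intros i j. apply Hgm. apply Hch.
    + intros i j. apply Hgc.
    + intros i. apply (tail_lub_inv HL (c := fun j => gs j (c i))).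
      intros j; apply Hgc. apply Hgl.
    + apply Hgcont; auto.
Qed.

Section F.
Context (Priv : Type).

Lemma po_fun (C E : preord) (HE : po E) : po (funspace Priv C E).
Proof.
  pose proof (po_lift HE) as HL.
  constructor.
  - intros f P d. apply (po_refl HL).
  - intros f g h H1 H2 P d. eapply (po_trans HL); [apply H1|apply H2].
  - intros [f Hf] [g Hg] H1 H2. simpl in *.
    assert (f = g).
    { apply functional_extensionality; intros P; apply functional_extensionality; intros d.
      apply (po_anti HL). apply H1. apply H2. }
    subst. f_equal. apply proof_irrelevance.
Qed.

Lemma pw_lub (C E : preord) (c : nat -> car (funspace Priv C E)) (f : car (funspace Priv C E)) :
  (forall P d, @is_lub (lift E) (fun i => proj1_sig (c i) P d) (proj1_sig f P d)) ->
  is_lub c f.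
Proof.
  intros H; split.
  - intros i P d. apply (H P d).
  - intros y Hy P d. apply (H P d). intros i; apply Hy.
Qed.

Lemma fun_lub_exists (C E : preord) (HE : po E) (HcE : complete E)
  (c : nat -> car (funspace Priv C E)) :
  chain c -> exists f : car (funspace Priv C E),
    forall P d, @is_lub (lift E) (fun i => proj1_sig (c i) P d) (proj1_sig f P d).
Proof.
  pose proof (po_lift HE) as HL. pose proof (complete_lift HE HcE) as HcL.
  intros Hc.
  assert (Ex : forall P d, exists w, @is_lub (lift E) (fun i => proj1_sig (c i) P d) w).
  { intros P d. apply HcL. intros i. apply Hc. }
  set (F := fun P d => proj1_sig (constructive_indefinite_description _ (Ex P d))).
  assert (HF : forall P d, @is_lub (lift E) (fun i => proj1_sig (c i) P d) (F P d)).
  { intros P d. unfold F. destruct (constructive_indefinite_description _ _); auto. }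
  assert (Hcont : forall P, continuous (C := C) (E := lift E) (F P)).
  { intros P. split.
    - intros x y Rxy. apply (HF P x). intros i. eapply (po_trans HL).
      apply (proj1 (proj2_sig (c i) P)); eauto. apply (HF P y).
    - intros cc x Hcc Hx.
      apply (exchange HL (a := fun i j => proj1_sig (c i) P (cc j))
                        (r := fun i => proj1_sig (c i) P x)).
      + intros i. apply (proj2 (proj2_sig (c i) P)); auto.
      + intros j. apply HF.
      + apply HF. }
  exists (exist _ F Hcont). simpl. auto.
Qed.

Lemma complete_fun (C E : preord) (HE : po E) (HcE : complete E) : complete (funspace Priv C E).
Proof.
  intros c Hc. destruct (fun_lub_exists HE HcE Hc) as (f&Hf). exists f. apply pw_lub; auto.
Qed.

Lemma lub_proj (C E : preord) (HE : po E) (HcE : complete E)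
  (c : nat -> car (funspace Priv C E)) f :
  chain c -> is_lub c f -> forall P d, @is_lub (lift E) (fun i => proj1_sig (c i) P d) (proj1_sig f P d).
Proof.
  intros Hc Hf. destruct (fun_lub_exists HE HcE Hc) as (g&Hg).
  assert (f = g). { apply (lub_unique (po_fun C HE) Hf). apply pw_lub; auto. }
  subst; auto.
Qed.

Lemma po_dom : forall t, po (dom Priv t) /\ complete (dom Priv t).
Proof.
  induction t as [|t1 IH1 t2 IH2].
  - split.
    + constructor; simpl; intros; congruence.
    + intros c Hc. exists (c 0). assert (forall i, c i = c 0).
      { induction i; auto. rewrite <- IHi. symmetry. apply Hc. }
      split; simpl. intros i; auto. intros y Hy. rewrite <- (Hy 0). auto.
  - destruct IH2 as [P2 C2]. split; [apply po_fun|apply complete_fun]; auto.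
Qed.

Lemma bool_lub (c : nat -> car (dom Priv Tbool)) a : is_lub c a -> forall i, c i = a.
Proof. intros [H _] i; apply H. Qed.
End F.

Section E.
Context (Priv : Type).

Definition rel_opt (o : option ty) : lift_opt Priv o -> lift_opt Priv o -> Prop :=
  match o return lift_opt Priv o -> lift_opt Priv o -> Prop with
  | Some t => fun a b => @rel (dom Priv t) a b
  | None => fun _ _ => True end.
Definition lub_opt (o : option ty) : (nat -> lift_opt Priv o) -> lift_opt Priv o -> Prop :=
  match o return (nat -> lift_opt Priv o) -> lift_opt Priv o -> Prop with
  | Some t => fun c a => @is_lub (dom Priv t) c a
  | None => fun _ _ => True end.

Definition relE D (h h' : env Priv D) := forall x, @rel_opt (lookup D x) (h x) (h' x).
Definition lubE D (c : nat -> env Priv D) (h : env Priv D) :=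
  forall x, @lub_opt (lookup D x) (fun i => c i x) (h x).
Definition chainE D (c : nat -> env Priv D) := forall i, relE (c i) (c (S i)).

Lemma relE_refl D (h : env Priv D) : relE h h.
Proof. intros x. generalize (h x). destruct (lookup D x); simpl; auto. intros; apply (po_refl (proj1 (po_dom Priv t))). Qed.

Lemma lubE_const D (h : env Priv D) : lubE (fun _ => h) h.
Proof. intros x. generalize (h x). destruct (lookup D x); simpl; auto. intros; apply (const_lub (proj1 (po_dom Priv t))). Qed.

Lemma chainE_const D (h : env Priv D) : chainE (fun _ => h).
Proof. intros i; apply relE_refl. Qed.

Lemma upd_rel D (h h' : env Priv D) x t (a a' : car (dom Priv t)) :
  relE h h' -> rel a a' -> relE (upd h x a) (upd h' x a').
Proof.
  intros H Ha y. unfold upd. simpl. destruct (Nat.eqb y x); simpl; auto.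
Qed.

Lemma upd_chain D (c : nat -> env Priv D) x t (ca : nat -> car (dom Priv t)) :
  chainE c -> chain ca -> chainE (fun i => upd (c i) x (ca i)).
Proof. intros H1 H2 i. apply upd_rel; auto. Qed.

Lemma upd_lub D (c : nat -> env Priv D) h x t (ca : nat -> car (dom Priv t)) a :
  lubE c h -> is_lub ca a -> lubE (fun i => upd (c i) x (ca i)) (upd h x a).
Proof.
  intros H Ha y. unfold upd. simpl. destruct (Nat.eqb y x); simpl; auto.
Qed.

Lemma cast_rel (o : option ty) t (H : o = Some t) (a b : lift_opt Priv o) :
  @rel_opt o a b -> @rel (dom Priv t) (eq_rect o (lift_opt Priv) a _ H) (eq_rect o (lift_opt Priv) b _ H).
Proof. subst. simpl. auto. Qed.

Lemma cast_lub (o : option ty) t (H : o = Some t) (c : nat -> lift_opt Priv o) a :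
  @lub_opt o c a -> @is_lub (dom Priv t) (fun i => eq_rect o (lift_opt Priv) (c i) _ H) (eq_rect o (lift_opt Priv) a _ H).
Proof. subst. simpl. auto. Qed.

Lemma mk_fun_eq (C E : preord) (f : pset Priv -> car C -> lifted (car E)) :
  (forall P, continuous (C := C) (E := lift E) (f P)) ->
  forall P d, proj1_sig (mk_fun f) P d = f P d.
Proof. intros H P d. unfold mk_fun. destruct excluded_middle_informative; [reflexivity|contradiction]. Qed.

End E.

Lemma kleene (C : preord) (HC : po C) (b : car C) (Hb : forall x, rel b x)
  (i : inhabited (car C)) (G : car C -> car C) :
  (forall x y, rel x y -> rel (G x) (G y)) ->
  (forall c x, chain c -> is_lub c x -> is_lub (fun k => G (c k)) (G x)) ->
  chain (fun k => Nat.iter k G b) /\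
  forall K, is_lub (fun k => Nat.iter k G b) K -> lfp i G = K.
Proof.
  intros Gm Gc.
  assert (Ch : chain (fun k => Nat.iter k G b)).
  { intros k. induction k; simpl. apply Hb. apply Gm. apply IHk. }
  split; auto.
  intros K HK.
  assert (Fix : G K = K).
  { apply (lub_unique HC (Gc _ _ Ch HK)).
    pose proof (tail_lub_inv HC 1 Ch HK) as H.
    eapply lub_ext; [|exact H]. intros k. simpl. rewrite Nat.add_1_r. reflexivity. }
  assert (Least : forall g', G g' = g' -> rel K g').
  { intros g' Hg. apply (proj2 HK). intros k. induction k; simpl. apply Hb.
    rewrite <- Hg. apply Gm. auto. }
  unfold lfp.
  destruct (epsilon_spec i (fun g => G g = g /\ forall g', G g' = g' -> rel g g')) as [E1 E2].
  { exists K; auto. }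
  apply (po_anti HC); auto.
Qed.

Section M.
Context (Principal Priv : Type) (A : Principal -> pset Priv).

Definition Mono D e t (d : typing D e t) :=
  forall n P (h h' : env Priv D), relE h h' -> lift_le (den A d n P h) (den A d n P h').
Definition Cont D e t (d : typing D e t) :=
  forall n P (c : nat -> env Priv D) h, chainE c -> lubE c h ->
    @is_lub (lift (dom Priv t)) (fun i => den A d n P (c i)) (den A d n P h).

Definition PD t := proj1 (po_dom Priv t).
Definition CD t := proj2 (po_dom Priv t).
Definition PL t := po_lift (PD t).

Lemma lam_cont D x t1 e t2 (d1 : typing ((x,t1)::D) e t2) :
  Mono d1 -> Cont d1 -> forall n (h : env Priv D) P,
  continuous (C := dom Priv t1) (E := lift (dom Priv t2)) (fun v => den A d1 n P (upd h x v)).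
Proof.
  intros Hm Hc n h P. split.
  - intros v v' R. apply Hm. apply upd_rel; auto. apply relE_refl.
  - intros cc v Hcc Hl. apply (Hc n P (fun i => upd h x (cc i)) (upd h x v)).
    apply upd_chain; auto. apply chainE_const. apply upd_lub; auto. apply lubE_const.
Qed.

Lemma const_chain (C : preord) (HC : po C) (a : car C) : chain (fun _ : nat => a).
Proof. intros i; apply (po_refl HC). Qed.

Lemma lam_case D x t1 e t2 (d1 : typing ((x,t1)::D) e t2) :
  Mono d1 -> Cont d1 -> Mono (T_lam d1) /\ Cont (T_lam d1).
Proof.
  intros Hm Hc. split.
  - intros n P h h' H. cbn [den]. apply vv_le. intros P' v.
    rewrite !mk_fun_eq by (intros; apply lam_cont; auto).
    apply Hm. apply upd_rel; auto. apply (po_refl (PD t1)).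
  - intros n P c h Hch Hl. cbn [den]. apply val_lub; [apply (PD (Tarrow t1 t2))|].
    apply pw_lub. intros P' v.
    rewrite mk_fun_eq by (intros; apply lam_cont; auto).
    apply (lub_ext (C := lift (dom Priv t2)) (c := fun i => den A d1 n P' (upd (c i) x v))).
    { intros i. rewrite mk_fun_eq; [reflexivity| intros; apply lam_cont; auto]. }
    apply (Hc n P' (fun i => upd (c i) x v) (upd h x v)).
    apply upd_chain; auto. apply (const_chain (PD t1)).
    apply upd_lub; auto. apply (const_lub (PD t1)).
Qed.

End M.

Section L.
Context (Principal Priv : Type) (A : Principal -> pset Priv).
Context (D : ctx) (f x : var) (e1 : expr Principal Priv) (t1 t2 : ty)
  (d1 : typing ((x,t1)::(f,Tarrow t1 t2)::D) e1 t2).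

Definition Gh n (h : env Priv D) (g : car (dom Priv (Tarrow t1 t2))) : car (dom Priv (Tarrow t1 t2)) :=
  mk_fun (C := dom Priv t1) (E := dom Priv t2)
    (fun P' v => den A d1 n P' (upd (upd h f (t := Tarrow t1 t2) g) x v)).

Definition Lf n (h : env Priv D) : car (dom Priv (Tarrow t1 t2)) :=
  lfp (inhabits (botfun Priv (dom Priv t1) (dom Priv t2))) (Gh n h).

Lemma botfun_le (g : car (dom Priv (Tarrow t1 t2))) : @rel (dom Priv (Tarrow t1 t2)) (botfun Priv _ _) g.
Proof. intros P d. left; reflexivity. Qed.

Section H.
Hypothesis (Hm : Mono A d1) (Hc : Cont A d1).

Lemma Gh_eq n h g P v : proj1_sig (Gh n h g) P v = den A d1 n P (upd (upd h f (t := Tarrow t1 t2) g) x v).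
Proof. unfold Gh. rewrite mk_fun_eq; auto. intros; apply lam_cont; auto. Qed.

Lemma Gh_mono n h h' g g' : relE h h' -> rel g g' -> @rel (dom Priv (Tarrow t1 t2)) (Gh n h g) (Gh n h' g').
Proof.
  intros H1 H2 P v. rewrite !Gh_eq. apply Hm. apply upd_rel; [apply upd_rel; auto|apply (po_refl (PD Priv t1))].
Qed.

Lemma Gh_cont n c h cg g : chainE c -> lubE c h -> chain cg -> is_lub cg g ->
  @is_lub (dom Priv (Tarrow t1 t2)) (fun i => Gh n (c i) (cg i)) (Gh n h g).
Proof.
  intros H1 H2 H3 H4. apply pw_lub. intros P v. rewrite Gh_eq.
  apply (lub_ext (C := lift (dom Priv t2)) (c := fun i => den A d1 n P (upd (upd (c i) f (t := Tarrow t1 t2) (cg i)) x v))).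
  { intros i; rewrite Gh_eq; reflexivity. }
  apply Hc. apply upd_chain. apply upd_chain; auto. apply (const_chain (PD Priv t1)).
  apply upd_lub. apply upd_lub; auto. apply (const_lub (PD Priv t1)).
Qed.

Definition it n h k := Nat.iter k (Gh n h) (botfun Priv (dom Priv t1) (dom Priv t2)).

Lemma Lf_char n h : chain (it n h) /\ is_lub (it n h) (Lf n h).
Proof.
  assert (K1 : forall g g', rel g g' -> @rel (dom Priv (Tarrow t1 t2)) (Gh n h g) (Gh n h g')).
  { intros; apply Gh_mono; auto. apply relE_refl. }
  assert (K2 : forall cg g, chain cg -> is_lub cg g -> @is_lub (dom Priv (Tarrow t1 t2)) (fun k => Gh n h (cg k)) (Gh n h g)).
  { intros. pose proof (@Gh_cont n (fun _ => h) h cg g (chainE_const h) (lubE_const h) H H0) as Z. exact Z. }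
  destruct (kleene (PD Priv (Tarrow t1 t2)) (b := botfun Priv _ _) botfun_le
            (inhabits (botfun Priv (dom Priv t1) (dom Priv t2))) K1 K2) as [Ch Eq].
  split; [exact Ch|].
  destruct (@CD Priv (Tarrow t1 t2) _ Ch) as (K&HK).
  assert (Z : Lf n h = K) by (apply Eq; exact HK). rewrite Z. exact HK.
Qed.

Lemma it_mono n h h' k : relE h h' -> rel (it n h k) (it n h' k).
Proof.
  intros H. unfold it. induction k; simpl. intros P d; left; reflexivity. apply Gh_mono; auto.
Qed.

Lemma Lf_mono n h h' : relE h h' -> rel (Lf n h) (Lf n h').
Proof.
  intros H. destruct (Lf_char n h) as [_ [_ L]]. apply L. intros k.
  eapply (po_trans (PD Priv (Tarrow t1 t2))). apply it_mono; eauto.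
  apply (proj1 (proj2 (Lf_char n h'))).
Qed.

Lemma Lf_cont n c h : chainE c -> lubE c h -> is_lub (fun i => Lf n (c i)) (Lf n h).
Proof.
  intros H1 H2.
  assert (Cl : forall k, is_lub (fun i => it n (c i) k) (it n h k)).
  { induction k; simpl.
    - apply (const_lub (PD Priv (Tarrow t1 t2))).
    - apply Gh_cont; auto. intros i. apply it_mono. apply H1. }
  apply (exchange (PD Priv (Tarrow t1 t2)) (a := fun k i => it n (c i) k) (r := fun k => it n h k)).
  - exact Cl.
  - intros j. apply Lf_char.
  - apply Lf_char.
Qed.
End H.
End L.

Section M2.
Context (Principal Priv : Type) (A : Principal -> pset Priv).
Lemma letrec_case D f x e1 e2 t1 t2 t (d1 : typing ((x,t1)::(f,Tarrow t1 t2)::D) e1 t2)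
  (d2 : typing ((f,Tarrow t1 t2)::D) e2 t) :
  Mono A d1 -> Cont A d1 -> Mono A d2 -> Cont A d2 -> Mono A (T_letrec d1 d2) /\ Cont A (T_letrec d1 d2).
Proof.
  intros Hm1 Hc1 Hm2 Hc2.
  assert (E : forall n P h, den A (T_letrec d1 d2) n P h = den A d2 n P (upd h f (t := Tarrow t1 t2) (Lf A d1 n h))) by reflexivity.
  split.
  - intros n P h h' H. rewrite !E. apply Hm2. apply upd_rel; auto. apply Lf_mono; auto.
  - intros n P c h H1 H2. rewrite E.
    apply (lub_ext (C := lift (dom Priv t)) (c := fun i => den A d2 n P (upd (c i) f (t := Tarrow t1 t2) (Lf A d1 n (c i))))).
    { intros; rewrite E; reflexivity. }
    apply Hc2. apply upd_chain; auto. intros i; apply Lf_mono; auto.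
    apply upd_lub; auto. apply Lf_cont; auto.
Qed.
End M2.

Section M3.
Context (Principal Priv : Type) (A : Principal -> pset Priv).

Lemma den_cont D e t (d : typing D e t) : Mono A d /\ Cont A d.
Proof.
  induction d.
  - split; intros n P; intros; simpl. apply (po_refl (PL Priv Tbool)). apply (const_lub (PL Priv Tbool)).
  - split.
    + intros n P h h' H. cbn [den]. apply vv_le. apply cast_rel. apply H.
    + intros n P c h Hc Hl. cbn [den]. apply val_lub. apply PD. apply cast_lub. apply Hl.
  - destruct IHd1 as [M0 C0], IHd2 as [M1 C1], IHd3 as [M2 C2]. split.
    + intros n P h h' H.
      change (lift_le (bind (den A d1 n P h) (fun b : bool => if b then den A d2 n P h else den A d3 n P h))
                      (bind (den A d1 n P h') (fun b : bool => if b then den A d2 n P h' else den A d3 n P h'))).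
      apply bind_mono with (C := dom Priv Tbool); auto. apply PD. apply PD.
      * intros [|]; auto.
      * intros a b R. simpl in R; subst. apply (po_refl (PL Priv t)).
    + intros n P c h Hc Hl.
      change (is_lub (C := lift (dom Priv t)) (fun i => bind (den A d1 n P (c i)) (fun b : bool => if b then den A d2 n P (c i) else den A d3 n P (c i)))
                      (bind (den A d1 n P h) (fun b : bool => if b then den A d2 n P h else den A d3 n P h))).
      apply bind_lub with (C := dom Priv Tbool)
        (gs := fun i (b : bool) => if b then den A d2 n P (c i) else den A d3 n P (c i)); auto.
      * apply PD.
      * apply PD.
      * intros i; apply M0; apply Hc.
      * intros i a b R; simpl in R; subst. apply (po_refl (PL Priv t)).
      * intros i [|]; auto.
      * intros [|]; auto.
      * intros cc a Hcc Ha. pose proof (bool_lub Ha) as E.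
        apply (lub_ext (C := lift (dom Priv t)) (c := fun _ => if a then den A d2 n P h else den A d3 n P h)).
        { intros i; rewrite E; reflexivity. }
        apply (const_lub (PL Priv t)).
  - apply lam_case; apply IHd.
  - destruct IHd1 as [M1 C1], IHd2 as [M2 C2].
    assert (Fm : forall (F : car (dom Priv (Tarrow t1 t2))) P a b, rel a b -> lift_le (proj1_sig F P a) (proj1_sig F P b)).
    { intros F P0 a b R. apply (proj1 (proj2_sig F P0)); auto. }
    assert (Bm : forall P (u u' : lifted (car (dom Priv t1))) (F F' : car (dom Priv (Tarrow t1 t2))),
              lift_le u u' -> rel F F' ->
              lift_le (bind u (fun v => proj1_sig F P v)) (bind u' (fun v => proj1_sig F' P v))).
    { intros P0 u u' F F' H1 H2. eapply bind_mono; [apply PD|apply PD|exact H1|intros a; apply H2|intros; apply Fm; auto]. }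
    split.
    + intros n P h h' H.
      change (lift_le (bind (den A d1 n P h) (fun F => bind (den A d2 n P h) (fun v => proj1_sig F P v)))
                      (bind (den A d1 n P h') (fun F => bind (den A d2 n P h') (fun v => proj1_sig F P v)))).
      apply bind_mono with (C := dom Priv (Tarrow t1 t2)); auto. apply PD. apply PD.
      * intros F. apply Bm; auto. apply (po_refl (PD Priv (Tarrow t1 t2))).
      * intros a b R. apply Bm; auto. apply (po_refl (PL Priv t1)).
    + intros n P c h Hc Hl.
      change (is_lub (C := lift (dom Priv t2)) (fun i => bind (den A d1 n P (c i)) (fun F => bind (den A d2 n P (c i)) (fun v => proj1_sig F P v)))
                      (bind (den A d1 n P h) (fun F => bind (den A d2 n P h) (fun v => proj1_sig F P v)))).
      apply bind_lub with (C := dom Priv (Tarrow t1 t2))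
        (gs := fun i F => bind (den A d2 n P (c i)) (fun v => proj1_sig F P v)); auto.
      * apply PD.
      * apply PD.
      * intros i; apply M1; apply Hc.
      * intros i a b R. apply Bm; auto. apply (po_refl (PL Priv t1)).
      * intros i a. apply Bm; auto. apply (po_refl (PD Priv (Tarrow t1 t2))).
      * intros F. apply bind_lub with (C := dom Priv t1) (gs := fun _ v => proj1_sig F P v); auto.
        apply PD. apply PD. intros i; apply M2; apply Hc.
        intros; apply (po_refl (PL Priv t2)).
        intros; apply (const_lub (PL Priv t2)).
        intros cc a Hcc Ha. apply (proj2 (proj2_sig F P)); auto.
      * intros cc F Hcc HF. apply bind_lub with (C := dom Priv t1) (u := fun _ => den A d2 n P h)
          (gs := fun i v => proj1_sig (cc i) P v); auto.
        apply PD. apply PD. apply (const_chain (PL Priv t1)). apply (const_lub (PL Priv t1)).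
        intros i a. apply Hcc.
        intros a. apply (lub_proj (PD Priv t2) (@CD Priv t2) Hcc HF).
        intros cc' a Hcc' Ha. apply (proj2 (proj2_sig F P)); auto.
  - destruct IHd1, IHd2. apply letrec_case; auto.
  - destruct IHd as [M C]. split; intros n0 P0; intros; cbn [den]; [apply M|apply C]; auto.
  - destruct IHd as [M C]. split; intros n0 P0; intros; cbn [den]; [apply M|apply C]; auto.
  - destruct IHd as [M C]. split; intros n0 P0; intros; cbn [den];
      destruct excluded_middle_informative; auto.
    apply (po_refl (PL Priv t)). apply (const_lub (PL Priv t)).
  - destruct IHd1 as [M1 C1], IHd2 as [M2 C2]. split; intros n0 P0; intros; cbn [den];
      destruct excluded_middle_informative; auto.
Qed.
End M3.

Section S.
Context (Priv : Type).

Unset Implicit Arguments.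
Fixpoint safeT (th : aty Priv) (t : ty) : lifted (car (dom Priv t)) -> Prop :=
  match th with
  | Abool => fun u => match u with Star => False | _ => True end
  | Aarrow th1 Pi th2 =>
      match t return lifted (car (dom Priv t)) -> Prop with
      | Tbool => fun u => match u with Star => False | _ => True end
      | Tarrow t1 t2 => fun u =>
          match u with
          | Bot => True | Star => False
          | Val f => forall P d, psubset Pi P -> safeT th1 t1 (Val d) -> safeT th2 t2 (proj1_sig f P d)
          end
      end
  end.

Set Implicit Arguments.
Lemma safe_iff th : forall u, @safe Priv th u <-> safeT th (aerase th) u.
Proof.
  induction th as [|th1 IH1 Pi th2 IH2]; intros u; destruct u as [| |f]; simpl; try tauto.
  split; intros H P d HP Hd; apply IH2; apply H; auto; apply IH1; auto.
Qed.

Lemma safeT_cast th t t' (e : t = t') u :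
  safeT th t u -> safeT th t' (eq_rect t (fun t => lifted (car (dom Priv t))) u t' e).
Proof. destruct e; auto. Qed.

Lemma safeT_sub th th' : subty th th' -> forall t u, safeT th t u -> safeT th' t u.
Proof.
  induction 1 as [|th1 th1' th2 th2' Pi1 Pi2 S1 IH1 S2 IH2 HPi]; intros t u H; auto.
  destruct t as [|t1 t2]; simpl in *; auto.
  destruct u as [| |f]; auto.
  intros P d HP Hd. apply IH2. apply H. intros q Hq; apply HP, HPi, Hq. apply IH1; auto.
Qed.

Lemma safe_bot th : @safe Priv th Bot.
Proof. destruct th; simpl; auto. Qed.

Lemma safe_adm th : forall (u : nat -> lifted (car (dom Priv (aerase th)))) w,
  @chain (lift _) u -> @is_lub (lift _) u w -> (forall k, safe (u k)) -> safe w.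
Proof.
  induction th as [|th1 IH1 Pi th2 IH2]; intros u w Hu Hw Hs;
    destruct (lift_lub_cases (PD Priv _) Hu Hw) as [(_&->)|[(k&Hk&->)|(k&a&c&Hc&Hch&Hl&->)]];
    try apply safe_bot; try (specialize (Hs k); rewrite Hk in Hs; simpl in Hs; contradiction).
  - simpl; auto.
  - simpl. intros P d HP Hd.
    apply (IH2 (fun i => proj1_sig (c i) P d)).
    + intros i; apply Hch.
    + apply (lub_proj (PD Priv _) (@CD Priv _) Hch Hl).
    + intros i. specialize (Hs (i + k)). rewrite Hc in Hs. simpl in Hs. apply Hs; auto.
Qed.

Lemma safe_env_upd G (h : env Priv (cerase G)) x th (d : car (dom Priv (aerase th))) :
  safe_env h -> safe (th := th) (Val d) ->
  @safe_env Priv ((x,th)::G) (upd h x d : env Priv (cerase ((x,th)::G))).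
Proof.
  intros Hh Hd y th' Hy. generalize (lookup_cerase Hy). revert Hy. unfold upd. simpl.
  destruct (Nat.eqb y x).
  - intros Hy e. injection Hy; intros; subst. rewrite (proof_irrelevance _ e eq_refl). simpl. exact Hd.
  - intros Hy e. rewrite (proof_irrelevance _ e (lookup_cerase Hy)). apply Hh.
Qed.
End S.

Section T.
Context (Principal Priv : Type) (A : Principal -> pset Priv).

Lemma den_cast D e t t' (H : t = t') (d : typing D e t) n P h :
  den A (eq_rect t (typing D e) d t' H) n P h =
  eq_rect t (fun t => lifted (car (dom Priv t))) (den A d n P h) t' H.
Proof. destruct H; reflexivity. Qed.

Lemma safe_star th : ~ @safe Priv th Star.
Proof. destruct th; simpl; auto. Qed.

Lemma safety G n e th Pi (D : atyping A G n e th Pi) :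
  forall P (h : env Priv (cerase G)), safe_env h -> psubset Pi P ->
    safe (den A (erase_deriv D) n P h).
Proof.
  induction D; intros P h Hh HP.
  - simpl; auto.
  - cbn [erase_deriv den]. apply Hh.
  - cbn [erase_deriv den safe]. intros P' d HP' Hd.
    unfold mk_fun. destruct excluded_middle_informative; simpl.
    + apply IHD; auto. apply safe_env_upd; auto.
    + apply safe_bot.
  - cbn [erase_deriv den]. fold (@aerase Priv th1) (@aerase Priv th2) (@aerase Priv th1'). rewrite den_cast.
    assert (S1 := IHD1 P h Hh ltac:(intros q Hq; apply HP; left; right; exact Hq)).
    assert (S2 := IHD2 P h Hh ltac:(intros q Hq; apply HP; right; exact Hq)).
    apply safe_iff in S2. apply (safeT_cast (subty_erase s)) in S2. apply (safeT_sub s) in S2.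
    apply safe_iff in S2.
    change (safe (th:=Aarrow th1 Pi th2) (@den _ _ A _ _ (Tarrow (aerase th1) (aerase th2)) (erase_deriv D1) n P h)) in S1.
    revert S1 S2.
    destruct (@den _ _ A _ _ (Tarrow (aerase th1) (aerase th2)) (erase_deriv D1) n P h) as [| |F]; simpl; intros S1 S2; try apply safe_bot; try contradiction.
    revert S2.
    destruct (eq_rect _ _ (den A (erase_deriv D2) n P h) _ (subty_erase s)) as [| |v]; simpl; intros S2;
      try apply safe_bot; try (exfalso; eapply safe_star; eassumption).
    apply S1; auto. intros q Hq; apply HP; left; left; exact Hq.
  - cbn [erase_deriv den].
    assert (S0 := IHD1 P h Hh ltac:(intros q Hq; apply HP; left; left; exact Hq)).
    change (safe (th:=Abool) (@den _ _ A _ _ Tbool (erase_deriv D1) n P h)) in S0.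
    revert S0. destruct (@den _ _ A _ _ Tbool (erase_deriv D1) n P h) as [| |b]; simpl; intros S0;
      try apply safe_bot; try contradiction.
    destruct b.
    + apply IHD2; auto. intros q Hq; apply HP; left; right; exact Hq.
    + apply IHD3; auto. intros q Hq; apply HP; right; exact Hq.
  - cbn [erase_deriv den]. apply IHD2; [|intros q Hq; apply HP; right; exact Hq].
    apply safe_env_upd; auto.
    pose proof (den_cont A (erase_deriv D1)) as [Hm Hc].
    destruct (@Lf_char Principal Priv A (cerase G) f x e1 (aerase th1) (aerase th2) (erase_deriv D1) Hm Hc n h) as [Ch Hl].
    change (safe (th := Aarrow th1 Pi th2) (Val (@Lf Principal Priv A (cerase G) f x e1 (aerase th1) (aerase th2) (erase_deriv D1) n h))).
    apply (safe_adm (th := Aarrow th1 Pi th2) (u := fun k => Val (it A (erase_deriv D1) n h k))).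
    + intros i; apply vv_le; apply Ch.
    + apply val_lub; auto. apply PD.
    + intros k. induction k.
      * cbn. intros; apply safe_bot.
      * change (safe (th := Aarrow th1 Pi th2) (Val (Gh A (erase_deriv D1) n h (it A (erase_deriv D1) n h k)))).
        unfold Gh, mk_fun. destruct excluded_middle_informative; simpl.
        -- intros P' d HP' Hd. apply IHD1; auto. apply safe_env_upd; auto. apply safe_env_upd; auto.
        -- intros; apply safe_bot.
  - cbn [erase_deriv den]. destruct excluded_middle_informative.
    + apply IHD; auto. intros q Hq; apply HP; left; exact Hq.
    + exfalso. apply n0. apply HP. right. reflexivity.
  - cbn [erase_deriv den]. apply IHD; auto.
    intros q [Hq|[Hq Ha]]; [left; apply HP; auto|right; auto].
  - cbn [erase_deriv den]. apply IHD; auto.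
    intros q Hq; split; auto.
  - cbn [erase_deriv den]. destruct excluded_middle_informative.
    + apply IHD1; auto. intros q Hq; apply HP; left; exact Hq.
    + apply IHD2; auto. intros q Hq; apply HP; right; exact Hq.
Qed.
End T.
Unset Implicit Arguments.

Theorem lemma2 (Principal Priv : Type) (A : Principal -> Priv -> Prop)
  (Delta : actx Priv) (n : Principal) (e : expr Principal Priv)
  (theta : aty Priv) (Pi : pset Priv)
  (D : atyping A Delta n e theta Pi) :
  forall (P : pset Priv) (h : env Priv (cerase Delta)),
    safe_env h -> psubset Pi P ->
    @safe Priv theta (den A (erase_deriv D) n P h).
Proof.
  intros P h Hh HP. apply safety; auto.
Qed.
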